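(* Let $G=(V,E)$ be a locally finite graph without isolated edge, and let $L=\{L_v:v\in V\}\cup\{L_e:e\in E\}$ be a set of lists of weights for $G$. For a subgraph $H$ of $G$, let $L_H$ denote the restriction of $L$ to $V(H)\cup E(H)$. If every finite induced subgraph $H$ of $G$ that is not isomorphic to $K_2$ has an $L_H$-weighting, then $G$ has an $L$-weighting.
   Context: Graphs are simple and may be infinite; locally finite means every vertex has finite degree; an isolated edge is a connected component isomorphic to $K_2$. Each list is a finite subset of $\{1,\dots,k\}$ for some natural number $k$. For a graph $F$ and a set of lists $M=\{M_v:v\in V(F)\}\cup\{M_e:e\in E(F)\}$, a weighting of $F$ from $M$ is a function $\omega\colon V(F)\cup E(F)\to\mathbb{Z}_{>0}$ with $\omega(v)\in M_v$ and $\omega(e)\in M_e$ for all vertices $v$ and edges $e$ of $F$. The weighted degree of a vertex $v$ in $F$ is $s_\omega(v)=\sum_{w\in N_F(v)}\omega(vw)+\omega(v)$. An $M$-weighting of $F$ is a weighting $\omega$ of $F$ from $M$ such that $s_\omega(u)\neq s_\omega(v)$ for every edge $uv$ of $F$. *)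

(* Defs.v *)
From mathcomp Require Import all_boot.
From Stdlib Require List.

Set Implicit Arguments.
Unset Strict Implicit.
Unset Printing Implicit Defensive.

Section Graphs.
Variable V : Type.

(* A locally finite simple graph on V is given by duplicate-free finite
   neighbour lists: u ~ v  iff  List.In v (nbr u). *)
Definition adj (nbr : V -> seq V) (u v : V) : Prop := List.In v (nbr u).

Definition simple_locally_finite_graph (nbr : V -> seq V) : Prop :=
  (forall v, List.NoDup (nbr v)) /\
  (forall v, ~ adj nbr v v) /\
  (forall u v, adj nbr u v -> adj nbr v u).

(* An isolated edge: a component isomorphic to K_2, i.e. an edge uv with
   N(u) = {v} and N(v) = {u}. *)
Definition no_isolated_edge (nbr : V -> seq V) : Prop :=
  ~ (exists u v, adj nbr u v /\
       (forall w, adj nbr u w -> w = v) /\ (forall w, adj nbr v w -> w = u)).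

Definition valid_lists (nbr : V -> seq V) (LV : V -> seq nat)
  (LE : V -> V -> seq nat) : Prop :=
  (forall u v, adj nbr u v -> LE u v = LE v u) /\
  (forall v x, x \in LV v -> 0 < x) /\
  (forall u v x, adj nbr u v -> x \in LE u v -> 0 < x).

(* A vertex subset given by a boolean predicate P; F = G[P] is the induced
   subgraph.  (P = predT gives G itself.) *)
Definition finite_vset (P : V -> bool) : Prop :=
  exists l : seq V, forall x, P x -> List.In x l.

Definition induced_is_K2 (nbr : V -> seq V) (P : V -> bool) : Prop :=
  exists u v, adj nbr u v /\ (forall x, P x <-> (x = u \/ x = v)).

Definition weighting_from (nbr : V -> seq V) (LV : V -> seq nat)
  (LE : V -> V -> seq nat) (P : V -> bool) (wv : V -> nat) (we : V -> V -> nat)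
  : Prop :=
  (forall v, P v -> 0 < wv v /\ wv v \in LV v) /\
  (forall u v, P u -> P v -> adj nbr u v ->
     [/\ 0 < we u v, we u v \in LE u v & we u v = we v u]).

Definition wdeg (nbr : V -> seq V) (P : V -> bool) (wv : V -> nat)
  (we : V -> V -> nat) (v : V) : nat :=
  sumn [seq we v w | w <- nbr v & P w] + wv v.

Definition has_L_weighting (nbr : V -> seq V) (LV : V -> seq nat)
  (LE : V -> V -> seq nat) (P : V -> bool) : Prop :=
  exists wv we, weighting_from nbr LV LE P wv we /\
    (forall u v, P u -> P v -> adj nbr u v ->
       wdeg nbr P wv we u <> wdeg nbr P wv we v).

End Graphs.

(* Main.v *)
Require Import Defs.
From mathcomp Require Import all_boot.
From mathcomp Require Import boolp classical_sets filter.
From Stdlib Require Classical_Prop.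

Local Open Scope classical_set_scope.

Lemma filter_all_In (T : Type) (Q : T -> bool) (s : seq T) :
  (forall w, List.In w s -> Q w) -> seq.filter Q s = s.
Proof.
elim: s => [//|a s IH] H /=.
by rewrite (H a (or_introl erefl)) IH // => w Hw; apply: H; right.
Qed.

Lemma map_ext_In (T R : Type) (f g : T -> R) (s : seq T) :
  (forall w, List.In w s -> f w = g w) -> map f s = map g s.
Proof.
elim: s => [//|a s IH] H /=.
by rewrite (H a (or_introl erefl)) IH // => w Hw; apply: H; right.
Qed.

Section Compactness.
Variables (V : Type) (nbr : V -> seq V) (LV : V -> seq nat) (LE : V -> V -> seq nat).
Hypothesis Hg : simple_locally_finite_graph nbr.
Hypothesis Hni : no_isolated_edge nbr.
Hypothesis HL : forall P : V -> bool, finite_vset P -> ~ induced_is_K2 nbr P ->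
     has_L_weighting nbr LV LE P.

Definition good (P : V -> bool) := finite_vset P /\ ~ induced_is_K2 nbr P.
Definition Bset (l : seq V) : set (V -> bool) :=
  fun P => good P /\ forall x, List.In x l -> P x.
Definition memb (l : seq V) : V -> bool := fun x => `[< List.In x l >].

Lemma memb_fin l : finite_vset (memb l).
Proof. by exists l => x /asboolP. Qed.

Lemma Bset_ne l : exists P, Bset l P.
Proof.
case: (pselect (induced_is_K2 nbr (memb l))) => [[a [b [ab Hab]]]|nK2]; last first.
  exists (memb l); split; first by split; [exact: memb_fin | exact: nK2].
  by move=> x Hx; apply/asboolP.
have [w Hw] : exists w, (adj nbr a w /\ w <> b) \/ (adj nbr b w /\ w <> a).
  apply: Classical_Prop.NNPP => Hn; apply: Hni; exists a, b; split => //.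
  by split => w Hw; apply: Classical_Prop.NNPP => Hne; apply: Hn; exists w; [left|right].
exists (memb (w :: l)); split; last by move=> x Hx; apply/asboolP; right.
split; first exact: memb_fin.
case: Hg => _ [Hirr Hsym].
move=> [c [d [_ Hcd]]].
have Ma : memb (w::l) a by apply/asboolP; right; apply/asboolP; apply/Hab; left.
have Mb : memb (w::l) b by apply/asboolP; right; apply/asboolP; apply/Hab; right.
have Mw : memb (w::l) w by apply/asboolP; left.
have ab' : a <> b by move=> E; subst; exact: (Hirr b ab).
have [wa wb] : w <> a /\ w <> b.
  by case: Hw => [[aw wb]|[bw wa]]; split => // E; subst; [exact: Hirr _ aw | exact: Hirr _ bw].
move/Hcd: Ma; move/Hcd: Mb; move/Hcd: Mw.
by move=> [?|?] [?|?] [?|?]; subst; congruence.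
Qed.

Definition F0 : set_system (V -> bool) := filter_from setT Bset.

Lemma PF0 : ProperFilter F0.
Proof.
apply: filter_from_proper; last by move=> i _; exact: Bset_ne.
apply: filter_fromT_filter; first by exists [::].
move=> i j; exists (i ++ j) => P [gP HP]; split; split => // x Hx; apply: HP;
  apply: List.in_or_app; by [left|right].
Qed.

Lemma main : has_L_weighting nbr LV LE (fun _ => true).
Proof.
have [U [UU F0U]] := ultraFilterLemma PF0.
have UB l : U (Bset l) by apply: F0U; exists l.
have Hex : forall P : V -> bool, exists s : (V -> nat) * (V -> V -> nat),
   good P -> weighting_from nbr LV LE P s.1 s.2 /\
     (forall u v, P u -> P v -> adj nbr u v ->
       wdeg nbr P s.1 s.2 u <> wdeg nbr P s.1 s.2 v).
  move=> P; case: (pselect (good P)) => [[f nk]|ng]; last first.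
    by exists ((fun _ => 0), (fun _ _ => 0)).
  by have [wv [we H]] := HL P f nk; exists (wv, we).
have [sel Hsel] := choice Hex.
have part (f : (V -> bool) -> nat) (s : seq nat) :
    U [set P | f P \in s] -> exists x, U [set P | f P = x].
  elim: s => [|a s IH] H.
    exfalso; apply: (filter_not_empty U); apply: filterS H => P /=.
    by rewrite in_nil.
  case: (in_ultra_setVsetC [set P | f P = a] UU) => [Ha|Hna]; first by exists a.
  apply: IH; apply: filterS (filterI H Hna) => P [/= Hin Hne].
  by move: Hin; rewrite inE => /orP [/eqP //|//].
have : forall v, exists x, U [set P | (sel P).1 v = x].
  move=> v; apply: (part _ (LV v)).
  apply: filterS (UB [:: v]) => P [gP Hv] /=.
  have [[Hw _] _] := Hsel P gP.
  by case: (Hw v (Hv v (or_introl erefl))).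
move/choice => [wv Hwv].
have [we Hwe] : {we : V -> V -> nat &
    forall u v, adj nbr u v -> U [set P | (sel P).2 u v = we u v]}.
  have : forall p : V * V, exists x, adj nbr p.1 p.2 ->
      U [set P | (sel P).2 p.1 p.2 = x].
    move=> [u v] /=; case: (pselect (adj nbr u v)) => [a|na]; last by exists 0.
    suff [x Hx] : exists x, U [set P | (sel P).2 u v = x] by exists x.
    apply: (part (fun P => (sel P).2 u v) (LE u v)).
    apply: filterS (UB [:: u; v]) => P [gP Hin] /=.
    have [[_ He] _] := Hsel P gP.
    have := He u v (Hin u (or_introl erefl)) (Hin v (or_intror (or_introl erefl))) a.
    by case.
  move/choice => [f Hf]; exists (fun u v => f (u, v)) => u v a; exact: (Hf (u, v) a).
have fin (X : Type) (A : X -> set (V -> bool)) (s : seq X) :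
    (forall x, List.In x s -> U (A x)) -> U [set P | forall x, List.In x s -> A x P].
  elim: s => [|a s IH] H; first by apply: filterS filterT => P _ x [].
  apply: filterS (filterI (H a (or_introl erefl)) (IH (fun x Hx => H x (or_intror Hx)))).
  by move=> P [Ha Hs] x [<-|Hx]; [exact: Ha | exact: Hs].
case: Hg => _ [Hirr Hsym].
exists wv, we; split; first split.
- move=> v _.
  have [P [[gP Hin] E]] := filter_ex (filterI (UB [:: v]) (Hwv v)).
  have [[Hw _] _] := Hsel P gP.
  rewrite -E; exact: Hw v (Hin v (or_introl erefl)).
- move=> u v _ _ a.
  have [P [[gP Hin] [E1 E2]]] :=
    filter_ex (filterI (UB [:: u; v]) (filterI (Hwe u v a) (Hwe v u (Hsym _ _ a)))).
  have [[_ He] _] := Hsel P gP.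
  have [h1 h2 h3] := He u v (Hin u (or_introl erefl))
     (Hin v (or_intror (or_introl erefl))) a.
  by move: E1 E2 => /= <- <-; split.
move=> u v _ _ a.
have Au := fin _ (fun w => [set P | (sel P).2 u w = we u w]) (nbr u)
  (fun w Hw => Hwe u w Hw).
have Av := fin _ (fun w => [set P | (sel P).2 v w = we v w]) (nbr v)
  (fun w Hw => Hwe v w Hw).
have [P [[gP Hin] [Eu [Ev [Hu Hv]]]]] :=
  filter_ex (filterI (UB (u :: v :: nbr u ++ nbr v))
    (filterI (Hwv u) (filterI (Hwv v) (filterI Au Av)))).
have Pu : P u by apply: Hin; left.
have Pv : P v by apply: Hin; right; left.
have Hne := (Hsel P gP).2 u v Pu Pv a.
have D (x : V) : (forall w, List.In w (nbr x) -> P w) ->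
    (sel P).1 x = wv x ->
    (forall w, List.In w (nbr x) -> (sel P).2 x w = we x w) ->
    wdeg nbr P (sel P).1 (sel P).2 x = wdeg nbr (fun _ => true) wv we x.
  move=> HP E1 E2; rewrite /wdeg (@filter_all_In _ _ _ HP).
  rewrite (@filter_all_In _ (fun _ => true)) // E1; congr (sumn _ + _).
  exact: map_ext_In.
rewrite -D //; last by move=> w Hw; apply: Hin; right; right;
  apply: List.in_or_app; left.
rewrite -D //; last by move=> w Hw; apply: Hin; right; right;
  apply: List.in_or_app; right.
Qed.

End Compactness.

Theorem lemma6 (V : Type) (nbr : V -> seq V) (LV : V -> seq nat)
  (LE : V -> V -> seq nat) :
  simple_locally_finite_graph nbr ->
  no_isolated_edge nbr ->
  valid_lists nbr LV LE ->
  (forall P : V -> bool, finite_vset P -> ~ induced_is_K2 nbr P ->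
     has_L_weighting nbr LV LE P) ->
  has_L_weighting nbr LV LE (fun _ => true).
Proof.
move=> Hg Hni _ HL; exact: main.
Qed.
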